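(* Suppose all $x_i$, $r_i$ and $L$ are integers. Then there is an algorithm that computes a minimum-cost feasible order-preserving solution in $O(\textsc{opt}^2\, n)$ time, where $\textsc{opt}$ is the minimum cost of a feasible order-preserving solution.
   Context: Barrier coverage problem: an instance consists of $L>0$ and $n$ sensors with locations $x_i$ and radii $r_i$, indexed so that $x_1\le\cdots\le x_n$. A solution $y\in\mathbb{R}^n$ places sensor $i$ to cover $[y_i-r_i,y_i+r_i]$; it is feasible if these intervals cover $[0,L]$; its cost is $\sum_i|y_i-x_i|$. A set $S$ is active for $y$ if $\bigcup_{i\in S}[y_i-r_i,y_i+r_i]\supseteq[0,L]$. A solution $y$ is order-preserving if it has an active set $S$ such that for all $i,j\in S$ with $i<j$ we have $y_i<y_j$. *)

(* Defs.v *)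
From Stdlib Require Import Reals ZArith List Lra Lia.
Open Scope R_scope.

(* An instance: n sensors, indices 0..n-1, locations x i, radii r i, length L. *)

Definition active (L : R) (r : nat -> R) (S : nat -> Prop) (y : nat -> R) : Prop :=
  forall t, 0 <= t <= L -> exists i, S i /\ y i - r i <= t <= y i + r i.

Definition feasible (n : nat) (L : R) (r : nat -> R) (y : nat -> R) : Prop :=
  active L r (fun i => (i < n)%nat) y.

Definition order_preserving (n : nat) (L : R) (r : nat -> R) (y : nat -> R) : Prop :=
  exists S : nat -> Prop,
    (forall i, S i -> (i < n)%nat) /\ active L r S y /\
    (forall i j, S i -> S j -> (i < j)%nat -> y i < y j).

Fixpoint cost_upto (k : nat) (x y : nat -> R) : R :=
  match k with
  | O => 0
  | S k' => cost_upto k' x y + Rabs (y k' - x k')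
  end.

Definition cost (n : nat) (x y : nat -> R) : R := cost_upto n x y.

(* Memory: Z-addressed cells holding integers.  Each instruction costs one step. *)
Inductive instr : Type :=
  | IConst (d : Z) (k : Z)          (* M[d] := k *)
  | IAdd   (d a b : Z)              (* M[d] := M[a] + M[b] *)
  | ISub   (d a b : Z)              (* M[d] := M[a] - M[b] *)
  | ILoad  (d a : Z)                (* M[d] := M[M[a]] *)
  | IStore (a s : Z)                (* M[M[a]] := M[s] *)
  | IJmpPos (a : Z) (t : nat)       (* if M[a] > 0 then pc := t *)
  | IHalt.

Definition mem := Z -> Z.

Definition upd (m : mem) (a v : Z) : mem := fun b => if Z.eqb b a then v else m b.

(* One step: None = halted (IHalt or pc outside program). *)
Definition step (P : list instr) (pc : nat) (m : mem) : option (nat * mem) :=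
  match nth_error P pc with
  | None => None
  | Some IHalt => None
  | Some (IConst d k) => Some (S pc, upd m d k)
  | Some (IAdd d a b) => Some (S pc, upd m d (m a + m b)%Z)
  | Some (ISub d a b) => Some (S pc, upd m d (m a - m b)%Z)
  | Some (ILoad d a) => Some (S pc, upd m d (m (m a)))
  | Some (IStore a s) => Some (S pc, upd m (m a) (m s))
  | Some (IJmpPos a t) => Some (if Z.ltb 0 (m a) then t else S pc, m)
  end.

(* run P fuel pc m = Some m' iff the machine halts after at most fuel steps,
   with final memory m'. *)
Fixpoint run (P : list instr) (fuel : nat) (pc : nat) (m : mem) : option mem :=
  match step P pc m with
  | None => Some m
  | Some (pc', m') =>
      match fuel with
      | O => None
      | S f => run P f pc' m'
      end
  end.

(* Input encoding: M[0] = n, M[1] = L, M[2+i] = x_i, M[2+n+i] = r_i (i < n),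
   all other cells 0.  Output: y_i is read from M[2+2n+i] after halting. *)
Definition init_mem (n : nat) (L : Z) (x r : nat -> Z) : mem :=
  fun a =>
    if Z.eqb a 0 then Z.of_nat n
    else if Z.eqb a 1 then L
    else if andb (Z.leb 2 a) (Z.ltb a (2 + Z.of_nat n)) then x (Z.to_nat (a - 2))
    else if andb (Z.leb (2 + Z.of_nat n) a) (Z.ltb a (2 + 2 * Z.of_nat n))
         then r (Z.to_nat (a - 2 - Z.of_nat n))
    else 0%Z.

Definition output (n : nat) (m : mem) : nat -> R :=
  fun i => IZR (m (2 + 2 * Z.of_nat n + Z.of_nat i)%Z).

(* Main.v *)
Require Import Defs.
From Stdlib Require Import Reals ZArith List Lia Lra Classical.
Import ListNotations.

Open Scope Z_scope.
Open Scope bool_scope.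

Definition validb (xi ri F d : Z) : bool := (xi + d - ri <=? F) && (F <=? xi + d + ri).
Definition cand (xi ri F d : Z) (st : Z*Z) : Z*Z :=
  if validb xi ri F d && (fst st <? xi + d + ri) then (xi+d+ri, d) else st.

Fixpoint scanu (xi ri : Z) (col : nat -> Z) (c m : nat) : Z*Z :=
  match m with
  | O => (col c, 0)
  | S m' => let st := scanu xi ri col c m' in
            let F := col (c - m')%nat in
            cand xi ri F (- Z.of_nat m') (cand xi ri F (Z.of_nat m') st)
  end.

Fixpoint BD (x r : nat -> Z) (i : nat) {struct i} : nat -> Z*Z :=
  match i with
  | O => fun _ => (0, 0)
  | S i' => fun c => scanu (x i') (r i') (fun c' => fst (BD x r i' c')) c (S c)
  end.

Definition Bs x r i c := fst (BD x r i c).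
Definition Ds x r i c := snd (BD x r i c).

Lemma cand_ge xi ri F d st : fst st <= fst (cand xi ri F d st).
Proof. unfold cand. destruct (validb _ _ _ _ && _) eqn:E; simpl; auto.
  apply andb_prop in E as [_ E]. apply Z.ltb_lt in E. lia. lia. Qed.

Lemma cand_valid xi ri F d st : validb xi ri F d = true -> xi + d + ri <= fst (cand xi ri F d st).
Proof. intros V. unfold cand. rewrite V. simpl.
  destruct (fst st <? xi + d + ri) eqn:E; simpl. lia. apply Z.ltb_ge in E. lia. Qed.

Lemma cand_char xi ri F d st : cand xi ri F d st = st \/
   (validb xi ri F d = true /\ cand xi ri F d st = (xi+d+ri, d)).
Proof. unfold cand. destruct (validb xi ri F d) eqn:E; simpl; auto.
  destruct (fst st <? _); auto. Qed.

Lemma scanu_ge xi ri col c m : col c <= fst (scanu xi ri col c m).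
Proof. induction m; simpl. lia.
  eapply Z.le_trans; [|apply cand_ge]. eapply Z.le_trans; [|apply cand_ge]. auto. Qed.

Lemma scanu_cand xi ri col c m e d : (e < m)%nat -> (d = Z.of_nat e \/ d = - Z.of_nat e) ->
  validb xi ri (col (c - e)%nat) d = true -> xi + d + ri <= fst (scanu xi ri col c m).
Proof. induction m; intros He Hd V. lia. simpl.
  destruct (Nat.eq_dec e m) as [->|Hne].
  - destruct Hd as [->| ->].
    + eapply Z.le_trans; [|apply cand_ge]. apply cand_valid; auto.
    + apply cand_valid; auto.
  - eapply Z.le_trans; [|apply cand_ge]. eapply Z.le_trans; [|apply cand_ge].
    apply IHm; auto; lia. Qed.

Lemma scanu_char xi ri col c m : scanu xi ri col c m = (col c, 0) \/
  exists e d, (e < m)%nat /\ (d = Z.of_nat e \/ d = - Z.of_nat e) /\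
   validb xi ri (col (c - e)%nat) d = true /\ scanu xi ri col c m = (xi+d+ri, d).
Proof. induction m; simpl; auto.
  set (st := scanu xi ri col c m) in *.
  destruct (cand_char xi ri (col (c-m)%nat) (- Z.of_nat m) (cand xi ri (col (c - m)%nat) (Z.of_nat m) st)) as [E1|[V1 E1]];
  rewrite E1; [|right; exists m, (- Z.of_nat m); repeat split; auto; lia].
  destruct (cand_char xi ri (col (c-m)%nat) (Z.of_nat m) st) as [E2|[V2 E2]];
  rewrite E2; [|right; exists m, (Z.of_nat m); repeat split; auto; lia].
  destruct IHm as [H|(e&d&H1&H2&H3&H4)]; auto. right; exists e, d; repeat split; auto. Qed.


Lemma Bs0 x r c : Bs x r 0 c = 0. Proof. reflexivity. Qed.

Lemma P1 x r i c : Bs x r i c <= Bs x r (S i) c.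
Proof. unfold Bs. simpl. apply (scanu_ge (x i) (r i) (fun c' => fst (BD x r i c')) c (S c)). Qed.

Lemma P2 x r i c e d : (e <= c)%nat -> (d = Z.of_nat e \/ d = - Z.of_nat e) ->
  validb (x i) (r i) (Bs x r i (c - e)%nat) d = true -> x i + d + r i <= Bs x r (S i) c.
Proof. intros. unfold Bs. simpl.
  apply (scanu_cand (x i) (r i) (fun c' => fst (BD x r i c')) c (S c) e d); auto. lia. Qed.

Lemma P3 x r i c : Bs x r (S i) c <> Bs x r i c ->
  let d := Ds x r (S i) c in (Z.abs_nat d <= c)%nat /\
  validb (x i) (r i) (Bs x r i (c - Z.abs_nat d)%nat) d = true /\ Bs x r (S i) c = x i + d + r i.
Proof. intros H. unfold Ds, Bs in *.
  assert (Eb: BD x r (S i) c = scanu (x i) (r i) (fun c' => fst (BD x r i c')) c (S c)) by reflexivity.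
  rewrite Eb in *.
  destruct (scanu_char (x i) (r i) (fun c' => fst (BD x r i c')) c (S c)) as [E|(e&d&H1&H2&H3&H4)].
  - rewrite E in H. simpl in H. congruence.
  - rewrite H4. simpl. assert (Z.abs_nat d = e) as ->. { destruct H2 as [-> | ->]; lia. }
    repeat split; auto; lia. Qed.

Lemma mono_step x r i : forall c, Bs x r i c <= Bs x r i (S c).
Proof. induction i; intros c. rewrite !Bs0. lia.
  assert (M : forall a b, (a <= b)%nat -> Bs x r i a <= Bs x r i b).
  { intros a b Hab. induction Hab. lia. specialize (IHi m). lia. }
  destruct (Z.eq_dec (Bs x r (S i) c) (Bs x r i c)) as [E|NE].
  - rewrite E. eapply Z.le_trans; [apply (IHi c)|apply P1].
  - destruct (P3 x r i c NE) as (Hd & V & Eq). set (d := Ds x r (S i) c) in *.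
    rewrite Eq. 
    destruct (Z_le_gt_dec (Bs x r i (S c - Z.abs_nat d)%nat) (x i + d + r i)) as [Hle|Hgt].
    + apply (P2 x r i (S c) (Z.abs_nat d) d). lia. lia.
      unfold validb in *. apply andb_prop in V as [V1 V2]. apply Z.leb_le in V1.
      apply andb_true_intro; split; apply Z.leb_le; auto.
      pose proof (M (c - Z.abs_nat d)%nat (S c - Z.abs_nat d)%nat ltac:(lia)). lia.
    + eapply Z.le_trans; [|apply P1]. pose proof (M (S c - Z.abs_nat d)%nat (S c) ltac:(lia)). lia.
Qed.

Lemma mono x r i a b : (a <= b)%nat -> Bs x r i a <= Bs x r i b.
Proof. intros Hab. induction Hab. lia. specialize (mono_step x r i m). lia. Qed.

Lemma dom x r i a d : x i + d - r i <= Bs x r i a -> x i + d + r i <= Bs x r (S i) (a + Z.abs_nat d).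
Proof. intros H.
  destruct (Z_le_gt_dec (Bs x r i a) (x i + d + r i)) as [Hle|Hgt].
  - apply (P2 x r i (a + Z.abs_nat d) (Z.abs_nat d) d). lia. lia.
    replace (a + Z.abs_nat d - Z.abs_nat d)%nat with a by lia.
    unfold validb. apply andb_true_intro; split; apply Z.leb_le; auto.
  - eapply Z.le_trans; [|apply P1]. pose proof (mono x r i a (a + Z.abs_nat d) ltac:(lia)). lia.
Qed.

Fixpoint recon (x r : nat -> Z) (i c : nat) {struct i} : nat -> Z :=
  match i with
  | O => x
  | S i' =>
    if Z.eq_dec (Bs x r (S i') c) (Bs x r i' c) then recon x r i' c
    else fun j => if Nat.eq_dec j i' then x i' + Ds x r (S i') c
                  else recon x r i' (c - Z.abs_nat (Ds x r (S i') c)) j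
  end.

Lemma recon_ge x r i : forall c j, (i <= j)%nat -> recon x r i c j = x j.
Proof. induction i; intros c j H; simpl; auto.
  destruct (Z.eq_dec _ _). apply IHi; lia.
  destruct (Nat.eq_dec j i). lia. apply IHi; lia. Qed.

Lemma cost_upto_ext k (x y y' : nat -> R) : (forall j, (j < k)%nat -> y j = y' j) ->
  cost_upto k x y = cost_upto k x y'.
Proof. induction k; intros H; simpl; auto. rewrite IHk by (intros; apply H; lia).
  rewrite H by lia. reflexivity. Qed.

Open Scope R_scope.

Definition SoundInv (n : nat) (r : nat -> R) (y : nat -> R) (F : R) :=
  exists S : nat -> Prop, (forall j, S j -> (j < n)%nat) /\
    (forall j, S j -> y j + r j <= F) /\
    (forall j k, S j -> S k -> (j < k)%nat -> y j < y k) /\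
    ((forall j, ~ S j) /\ F = 0 \/
     forall t, 0 <= t <= F -> exists j, S j /\ y j - r j <= t <= y j + r j).

Lemma soundness x r i : forall c,
  cost_upto i (fun j => IZR (x j)) (fun j => IZR (recon x r i c j)) <= INR c /\
  SoundInv i (fun j => IZR (r j)) (fun j => IZR (recon x r i c j)) (IZR (Bs x r i c)).
Proof.
  induction i; intros c.
  - simpl. split. apply pos_INR. exists (fun _ => False). split; [tauto|split;[tauto|split;[tauto|]]]. left. split; [tauto|]. unfold Bs. simpl. reflexivity.
  - destruct (Z.eq_dec (Bs x r (S i) c) (Bs x r i c)) as [E|NE].
    + assert (Er: recon x r (S i) c = recon x r i c) by (simpl; destruct (Z.eq_dec _ _); congruence).
      rewrite Er, E. destruct (IHi c) as [H1 (Sa&H2&H3&H4&H5)]. split.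
      * simpl. rewrite recon_ge by lia. replace (IZR (x i) - IZR (x i)) with 0 by ring.
        rewrite Rabs_R0. lra.
      * exists Sa. split; [intros j Hj; specialize (H2 j Hj); lia| tauto].
    + destruct (P3 x r i c NE) as (Hd & V & Eq).
      set (d := Ds x r (S i) c) in *. set (c' := (c - Z.abs_nat d)%nat) in *.
      set (y0 := recon x r i c').
      assert (Ey: forall j, recon x r (S i) c j = if Nat.eq_dec j i then (x i + d)%Z else y0 j).
      { intros j. simpl. destruct (Z.eq_dec _ _); [congruence|]. reflexivity. }
      assert (Ey0: forall j, (j < i)%nat -> recon x r (S i) c j = y0 j).
      { intros j Hj. rewrite Ey. destruct (Nat.eq_dec j i); [lia|auto]. }
      assert (Eyi: recon x r (S i) c i = (x i + d)%Z). { rewrite Ey. destruct (Nat.eq_dec i i); congruence. }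
      destruct (IHi c') as [H1 (Sa&H2&H3&H4&H5)].
      unfold validb in V. apply andb_prop in V as [V1 V2]. apply Z.leb_le in V1. apply Z.leb_le in V2.
      set (F0 := Bs x r i c') in *.
      set (yy := fun j => IZR (recon x r (S i) c j)).
      assert (Eyy: forall j, (j < i)%nat -> yy j = IZR (y0 j)). { intros; unfold yy; rewrite Ey0; auto. }
      assert (Eyyi: yy i = IZR (x i + d)%Z). { unfold yy; rewrite Eyi; auto. }
      split.
      * simpl. rewrite (cost_upto_ext i _ _ (fun j => IZR (y0 j))) by (intros; apply Eyy; auto).
        fold yy. rewrite Eyyi. rewrite <- minus_IZR. replace (x i + d - x i)%Z with d by ring.
        rewrite <- abs_IZR.
        assert (Hc: INR c = INR c' + IZR (Z.abs d)).
        { unfold c'. rewrite <- (Nat.sub_add (Z.abs_nat d) c Hd) at 1. rewrite plus_INR.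
          rewrite (INR_IZR_INZ (Z.abs_nat d)), Zabs2Nat.id_abs. reflexivity. }
        unfold y0. rewrite Hc. lra.
      * fold yy. rewrite Eq. unfold y0 in *.
        assert (Hx: IZR (x i) + IZR d - IZR (r i) <= IZR F0) by (rewrite <- plus_IZR, <- minus_IZR; apply IZR_le; lia).
        assert (Hx2: IZR F0 <= IZR (x i) + IZR d + IZR (r i)) by (rewrite <- !plus_IZR; apply IZR_le; lia).
        rewrite !plus_IZR. rewrite plus_IZR in Eyyi.
        exists (fun j => (Sa j /\ yy j < yy i) \/ j = i). repeat split.
        -- intros j [[Hj _]| ->]; [specialize (H2 j Hj)|]; lia.
        -- intros j [[Hj _]| ->].
           ++ rewrite Eyy by auto. specialize (H3 j Hj). lra.
           ++ lra.
        -- intros j k [[Hj Hj']| ->] [[Hk Hk']| ->] Hjk.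
           ++ rewrite !Eyy by auto. auto.
           ++ auto.
           ++ specialize (H2 k Hk). lia.
           ++ lia.
        -- right. intros t Ht.
           destruct (Rle_dec t (IZR F0)) as [Hle|Hgt].
           ++ destruct H5 as [[Hemp HF0]|Hcov].
              ** exists i. split; auto. rewrite Eyyi. lra.
              ** destruct (Hcov t ltac:(lra)) as (j & Hj & Hjt).
                 pose proof (H2 j Hj) as Hji. rewrite <- Eyy in Hjt by auto.
                 destruct (Rlt_dec (yy j) (yy i)) as [Hlt|Hnlt].
                 --- exists j. split; auto.
                 --- exists i. split; auto. specialize (H3 j Hj). rewrite <- Eyy in H3 by auto.
                     rewrite Eyyi in *. lra.
           ++ exists i. split; auto. rewrite Eyyi. lra.
Qed.

Open Scope R_scope.

Lemma fl_spec z r : IZR z <= r < IZR z + 1 -> Int_part r = z.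
Proof. intros H. symmetry. apply Int_part_spec. lra. Qed.

Lemma fl_le r : IZR (Int_part r) <= r. Proof. apply base_Int_part. Qed.
Lemma fl_gt r : r < IZR (Int_part r) + 1. Proof. pose proof (base_Int_part r). lra. Qed.

Lemma fl_mono r s : r <= s -> (Int_part r <= Int_part s)%Z.
Proof. intros H. destruct (Z_le_gt_dec (Int_part r) (Int_part s)); auto.
  exfalso. pose proof (fl_le r). pose proof (fl_gt s).
  assert (IZR (Int_part s) + 1 <= IZR (Int_part r)) by (rewrite <- plus_IZR; apply IZR_le; lia). lra. Qed.

Lemma fl_shift r z : Int_part (r + IZR z) = (Int_part r + z)%Z.
Proof. apply fl_spec. rewrite plus_IZR. pose proof (fl_le r). pose proof (fl_gt r). lra. Qed.

Lemma fl_IZR z : Int_part (IZR z) = z.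
Proof. apply fl_spec. lra. Qed.

Fixpoint kth (x : nat -> Z) (y : nat -> R) (th : R) (i : nat) : nat :=
  match i with O => O | S i' => (kth x y th i' + Z.abs_nat (Int_part (y i' + th) - x i'))%nat end.

Lemma eps_lemma (P : nat -> Prop) (l : nat -> R) (Phi : R) m :
  exists eps, 0 < eps /\ forall j, (j < m)%nat -> P j -> l j > Phi -> l j >= Phi + eps.
Proof. induction m.
  - exists 1. split. lra. intros; lia.
  - destruct IHm as (e & He & H).
    destruct (classic (P m /\ l m > Phi)) as [[Pm Hm]|N].
    + exists (Rmin e (l m - Phi)). split. apply Rmin_pos; lra.
      intros j Hj Pj Hl. destruct (Nat.eq_dec j m) as [->|Hne].
      * pose proof (Rmin_r e (l m - Phi)). lra.
      * pose proof (H j ltac:(lia) Pj Hl). pose proof (Rmin_l e (l m - Phi)). lra.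
    + exists e. split; auto. intros j Hj Pj Hl. destruct (Nat.eq_dec j m) as [->|Hne].
      * exfalso. apply N. auto.
      * apply H; auto; lia.
Qed.

Lemma completeness_theta (x r : nat -> Z) (n : nat) (L : Z) (y : nat -> R) (S : nat -> Prop) (th : R) :
  (0 < L)%Z -> 0 <= th < 1 ->
  (forall i, S i -> (i < n)%nat) ->
  active (IZR L) (fun i => IZR (r i)) S y ->
  (forall i j, S i -> S j -> (i < j)%nat -> y i < y j) ->
  (L <= Bs x r n (kth x y th n))%Z.
Proof.
  intros HL Hth HSn Hact Hinc.
  assert (Inv: forall i, exists Phi, 0 <= Phi /\ (Int_part (Phi + th) <= Bs x r i (kth x y th i))%Z /\
     (forall j, (j < i)%nat -> S j -> y j - IZR (r j) <= Phi -> y j + IZR (r j) <= Phi)).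
  { induction i.
    - exists 0. split. lra. split. rewrite Rplus_0_l, (fl_spec 0 th) by (simpl; lra). unfold Bs. simpl. lia.
      intros; lia.
    - destruct IHi as (Phi & H0 & H1 & H2).
      destruct (classic (S i /\ y i - IZR (r i) <= Phi)) as [[Si Hl]|NU].
      + exists (Rmax Phi (y i + IZR (r i))). split. eapply Rle_trans; [apply H0|apply Rmax_l].
        split.
        * simpl. set (k := kth x y th i). set (d := (Int_part (y i + th) - x i)%Z).
          assert (Hdom: (x i + d - r i <= Bs x r i k)%Z).
          { unfold d. replace (x i + (Int_part (y i + th) - x i) - r i)%Z with (Int_part (y i + th) + (- r i))%Z by ring.
            rewrite <- fl_shift. rewrite opp_IZR. eapply Z.le_trans; [|apply H1]. apply fl_mono. lra. }
          pose proof (dom x r i k d Hdom) as Hd.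
          assert (E2: (x i + d + r i)%Z = Int_part (y i + IZR (r i) + th)).
          { unfold d. replace (y i + IZR (r i) + th) with ((y i + th) + IZR (r i)) by ring. rewrite fl_shift. ring. }
          pose proof (P1 x r i (k + Z.abs_nat d)) as Hp1.
          pose proof (mono x r i k (k + Z.abs_nat d) ltac:(lia)) as Hm.
          unfold Rmax. destruct (Rle_dec Phi (y i + IZR (r i))). rewrite <- E2; exact Hd. fold k in H1. lia.
        * intros j Hj Sj Hlj. destruct (Nat.eq_dec j i) as [->|Hne]. apply Rmax_r.
          destruct (Rle_dec (y j - IZR (r j)) Phi) as [Hle|Hgt].
          -- eapply Rle_trans; [apply H2; auto; lia|apply Rmax_l].
          -- assert (y j < y i) by (apply Hinc; auto; lia).
             eapply Rle_trans; [|apply Rmax_r]. lra.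
      + exists Phi. split; auto. split.
        * simpl. eapply Z.le_trans; [apply H1|]. eapply Z.le_trans; [|apply P1]. apply mono. lia.
        * intros j Hj Sj Hlj. destruct (Nat.eq_dec j i) as [->|Hne].
          -- exfalso. apply NU. auto.
          -- apply H2; auto; lia. }
  destruct (Inv n) as (Phi & H0 & H1 & H2).
  assert (HPhi: IZR L <= Phi).
  { destruct (Rle_dec (IZR L) Phi) as [|Hlt]; auto. exfalso. apply Rnot_le_lt in Hlt.
    destruct (eps_lemma S (fun j => y j - IZR (r j)) Phi n) as (e & He & HE).
    set (t := Phi + Rmin e (IZR L - Phi) / 2).
    assert (Hm1: 0 < Rmin e (IZR L - Phi)) by (apply Rmin_pos; lra).
    pose proof (Rmin_l e (IZR L - Phi)). pose proof (Rmin_r e (IZR L - Phi)).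
    destruct (Hact t ltac:(unfold t; lra)) as (j & Sj & Hjt).
    pose proof (HSn j Sj).
    destruct (Rle_dec (y j - IZR (r j)) Phi) as [Hle|Hgt].
    - pose proof (H2 j ltac:(auto) Sj Hle). unfold t in Hjt. lra.
    - pose proof (HE j ltac:(auto) Sj ltac:(lra)). unfold t in Hjt. lra. }
  eapply Z.le_trans; [|apply H1].
  replace L with (Int_part (IZR L + th)).
  apply fl_mono. lra. rewrite Rplus_comm, fl_shift, (fl_spec 0 th) by (simpl; lra). ring.
Qed.

Open Scope Z_scope.

Notation RN := (-1). Notation RL := (-2). Notation RW2 := (-3). Notation RK := (-4).
Notation RCOL := (-5). Notation RI := (-6). Notation RXA := (-7). Notation RRA := (-8).
Notation RXI := (-9). Notation RRI := (-10). Notation RBEST := (-11). Notation RBD := (-12).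
Notation RP := (-13). Notation RE := (-14). Notation RCNT := (-15). Notation RF := (-16).
Notation RY := (-17). Notation RLF := (-18). Notation RRG := (-19). Notation RT := (-20).
Notation RONE := (-21). Notation RD := (-22). Notation RFL := (-23). Notation RQ := (-24).
Notation ROA := (-25). Notation RA := (-26). Notation RV := (-27). Notation RZ := (-28).
Notation RRP := (-29).

Definition prog : list instr := [
 IConst RT 0; ILoad RN RT; IConst RT 1; ILoad RL RT; IConst RONE 1;
 IConst RZ 0; IAdd RW2 RN RN; IAdd RW2 RW2 RONE; IAdd RW2 RW2 RONE; IAdd RCOL RW2 RN;
 IConst RK 0;
 (*11 COLHEAD*) IConst RI 1; IAdd RXA RONE RONE; IAdd RRA RXA RN; IAdd RRP RCOL RZ;
 (*15 ROWHEAD*) ISub RT RI RN; IJmpPos RT 58; ILoad RXI RXA; ILoad RRI RRA; ILoad RBEST RRP;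
 IConst RBD 0; IAdd RP RRP RZ; IConst RE 0; IAdd RCNT RK RONE;
 (*24 EHEAD*) IJmpPos RCNT 26; IJmpPos RONE 49;
 (*26 EBODY*) ILoad RF RP; IAdd RD RE RZ; IConst RFL 1;
 (*29 CHK*) IAdd RY RXI RD; ISub RLF RY RRI; IAdd RRG RY RRI; ISub RT RLF RF; IJmpPos RT 41;
 ISub RT RF RRG; IJmpPos RT 41; ISub RT RRG RBEST; IJmpPos RT 39; IJmpPos RONE 41;
 (*39*) IAdd RBEST RRG RZ; IAdd RBD RD RZ;
 (*41 CHKEND*) IJmpPos RFL 46; ISub RP RP RW2; IAdd RE RE RONE; ISub RCNT RCNT RONE; IJmpPos RONE 24;
 (*46 SECOND*) ISub RD RZ RE; IConst RFL 0; IJmpPos RONE 29;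
 (*49 ROWEND*) IAdd RRP RRP RONE; IAdd RRP RRP RONE; IStore RRP RBEST; IAdd RA RRP RONE; IStore RA RBD;
 IAdd RI RI RONE; IAdd RXA RXA RONE; IAdd RRA RRA RONE; IJmpPos RONE 15;
 (*58 EXITROWS*) ILoad RV RRP; ISub RT RL RV; IJmpPos RT 62; IJmpPos RONE 65;
 (*62 NEXTCOL*) IAdd RK RK RONE; IAdd RCOL RCOL RW2; IJmpPos RONE 11;
 (*65 BACK*) IAdd RQ RRP RZ; IAdd RI RN RZ; IAdd ROA RW2 RN; ISub ROA ROA RONE; IAdd RXA RONE RN;
 (*70 BHEAD*) IJmpPos RI 72; IHalt;
 (*72 BBODY*) ILoad RV RQ; ISub RA RQ RONE; ISub RA RA RONE; ILoad RT RA; ISub RT RV RT; IJmpPos RT 80;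
 ILoad RY RXA; IJmpPos RONE 91;
 (*80 USED*) IAdd RA RQ RONE; ILoad RD RA; ILoad RY RXA; IAdd RY RY RD; IJmpPos RD 86; ISub RD RZ RD;
 (*86 MLOOP*) IJmpPos RD 88; IJmpPos RONE 91; ISub RQ RQ RW2; ISub RD RD RONE; IJmpPos RONE 86;
 (*91 WRITE*) IStore ROA RY; ISub RQ RQ RONE; ISub RQ RQ RONE; ISub ROA ROA RONE; ISub RXA RXA RONE;
 ISub RI RI RONE; IJmpPos RONE 70 ].

Inductive Steps : nat -> nat -> mem -> nat -> mem -> Prop :=
| St0 pc m : Steps 0 pc m pc m
| StS k pc m pc1 m1 pc2 m2 : step prog pc m = Some (pc1, m1) -> Steps k pc1 m1 pc2 m2 ->
    Steps (S k) pc m pc2 m2.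

Lemma Steps_trans k1 k2 a ma b mb c mc : Steps k1 a ma b mb -> Steps k2 b mb c mc -> Steps (k1 + k2) a ma c mc.
Proof. induction 1; intros; simpl; auto. econstructor; eauto. Qed.

Lemma Steps_run k pc m pc' m' f : Steps k pc m pc' m' -> step prog pc' m' = None -> (k <= f)%nat ->
  run prog f pc m = Some m'.
Proof. intros H. revert f. induction H; intros f Hn Hf.
  - destruct f; simpl; rewrite Hn; auto.
  - destruct f. lia. simpl. rewrite H. apply IHSteps; auto; lia. Qed.

Lemma upd_eq m d v a : a = d -> upd m d v a = v.
Proof. intros ->. unfold upd. rewrite Z.eqb_refl. auto. Qed.
Lemma upd_ne m d v a : a <> d -> upd m d v a = m a.
Proof. intros H. unfold upd. destruct (Z.eqb_spec a d); congruence. Qed.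

Lemma jmp_yes pc a t m : nth_error prog pc = Some (IJmpPos a t) -> 0 < m a -> step prog pc m = Some (t, m).
Proof. intros H H2. unfold step. rewrite H. destruct (Z.ltb_spec 0 (m a)); auto; lia. Qed.
Lemma jmp_no pc a t m : nth_error prog pc = Some (IJmpPos a t) -> m a <= 0 -> step prog pc m = Some (S pc, m).
Proof. intros H H2. unfold step. rewrite H. destruct (Z.ltb_spec 0 (m a)); auto; lia. Qed.

Ltac rd := repeat match goal with
  | |- context [upd ?m ?d ?v ?a] =>
      first [rewrite (upd_eq m d v a) by (reflexivity || lia) | rewrite (upd_ne m d v a) by lia]
  end.
Ltac rdin H := repeat match type of H with
  | context [upd ?m ?d ?v ?a] =>
      first [rewrite (upd_eq m d v a) in H by (reflexivity || lia) | rewrite (upd_ne m d v a) in H by lia]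
  end.

Ltac s1 := eapply StS; [reflexivity|].
Ltac jy := eapply StS; [eapply jmp_yes; [reflexivity| rd; lia]|].
Ltac jn := eapply StS; [eapply jmp_no; [reflexivity| rd; lia]|].

Open Scope Z_scope.

Definition frame6 (m m' : mem) := forall a, a <> RY -> a <> RLF -> a <> RRG -> a <> RT -> a <> RBEST -> a <> RBD -> m' a = m a.

Lemma chk m : m RZ = 0 -> m RONE = 1 -> exists k m', (k <= 11)%nat /\ Steps k 29 m 41 m' /\
  (m' RBEST, m' RBD) = cand (m RXI) (m RRI) (m RF) (m RD) (m RBEST, m RBD) /\ frame6 m m'.
Proof.
  intros HZ HONE. unfold cand, validb. simpl.
  destruct (Z.leb_spec (m RXI + m RD - m RRI) (m RF)) as [H1|H1]; simpl.
  2:{ do 2 eexists. split; [|split]. 2:{ s1; s1; s1; s1; jy. apply St0. } lia.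
      split. rd. reflexivity. intros a; intros; rd. reflexivity. }
  destruct (Z.leb_spec (m RF) (m RXI + m RD + m RRI)) as [H2|H2]; simpl.
  2:{ do 2 eexists. split; [|split]. 2:{ s1; s1; s1; s1; jn; s1; jy. apply St0. } lia.
      split. rd. reflexivity. intros a; intros; rd. reflexivity. }
  destruct (Z.ltb_spec (m RBEST) (m RXI + m RD + m RRI)) as [H3|H3]; simpl.
  - do 2 eexists. split; [|split]. 2:{ s1; s1; s1; s1; jn; s1; jn; s1; jy; s1; s1. apply St0. } lia.
    split. rd. rewrite HZ, !Z.add_0_r. reflexivity. intros a; intros; rd. reflexivity.
  - do 2 eexists. split; [|split]. 2:{ s1; s1; s1; s1; jn; s1; jn; s1; jn; jy. apply St0. } lia.
    split. rd. reflexivity. intros a; intros; rd. reflexivity.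
Qed.

Open Scope Z_scope.

Definition Wz (n : nat) : Z := Z.of_nat n + 1.
Definition T0 (n : nat) : Z := 3 * Z.of_nat n + 2.

Definition BV n x r (j : Z) : Z := Bs x r (Z.to_nat (j mod Wz n)) (Z.to_nat (j / Wz n)).
Definition DV n x r (j : Z) : Z := Ds x r (Z.to_nat (j mod Wz n)) (Z.to_nat (j / Wz n)).

Lemma decode n c i : (i <= n)%nat ->
  (Z.of_nat c * Wz n + Z.of_nat i) mod Wz n = Z.of_nat i /\ (Z.of_nat c * Wz n + Z.of_nat i) / Wz n = Z.of_nat c.
Proof. intros H. unfold Wz. split.
  - rewrite Z.add_comm, Z.mod_add by lia. apply Z.mod_small. lia.
  - rewrite Z.add_comm, Z.div_add by lia. rewrite Z.div_small by lia. lia. Qed.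

Lemma BV_dec n x r c i : (i <= n)%nat -> BV n x r (Z.of_nat c * Wz n + Z.of_nat i) = Bs x r i c.
Proof. intros H. unfold BV. destruct (decode n c i H) as [-> ->]. rewrite !Nat2Z.id. auto. Qed.
Lemma DV_dec n x r c i : (i <= n)%nat -> DV n x r (Z.of_nat c * Wz n + Z.of_nat i) = Ds x r i c.
Proof. intros H. unfold DV. destruct (decode n c i H) as [-> ->]. rewrite !Nat2Z.id. auto. Qed.

Definition Consts n L (m : mem) := m RN = Z.of_nat n /\ m RL = L /\ m RW2 = 2 * Wz n /\ m RONE = 1 /\ m RZ = 0.

Definition HeapDP n L x r (m : mem) (idx : Z) :=
  (forall a, 0 <= a < T0 n -> m a = init_mem n L x r a) /\
  (forall j, 0 <= j < idx -> m (T0 n + 2 * j) = BV n x r j /\ m (T0 n + 2 * j + 1) = DV n x r j) /\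
  (forall a, 0 <= a -> T0 n + 2 * idx <= a -> m a = 0).

Lemma heap_ext n L x r m m' idx : (forall a, 0 <= a -> m' a = m a) -> HeapDP n L x r m idx -> HeapDP n L x r m' idx.
Proof. unfold HeapDP, T0 in *. intros E (H1&H2&H3). split; [|split].
  - intros a Ha. rewrite E by lia. auto.
  - intros j Hj. rewrite !E by lia. auto.
  - intros a Ha Ha'. rewrite E by lia. apply H3; lia. Qed.

Lemma init_x n L x r i : (1 <= i <= n)%nat -> init_mem n L x r (1 + Z.of_nat i) = x (i - 1)%nat.
Proof. intros H. unfold init_mem.
  destruct (Z.eqb_spec (1 + Z.of_nat i) 0); [lia|].
  destruct (Z.eqb_spec (1 + Z.of_nat i) 1); [lia|].
  destruct (Z.leb_spec 2 (1 + Z.of_nat i)); [|lia]. destruct (Z.ltb_spec (1 + Z.of_nat i) (2 + Z.of_nat n)); [|lia].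
  cbn [andb]. f_equal. lia. Qed.

Lemma init_r n L x r i : (1 <= i <= n)%nat -> init_mem n L x r (1 + Z.of_nat n + Z.of_nat i) = r (i - 1)%nat.
Proof. intros H. unfold init_mem.
  destruct (Z.eqb_spec (1 + Z.of_nat n + Z.of_nat i) 0); [lia|].
  destruct (Z.eqb_spec (1 + Z.of_nat n + Z.of_nat i) 1); [lia|].
  destruct (Z.leb_spec 2 (1 + Z.of_nat n + Z.of_nat i)); [|lia]. destruct (Z.ltb_spec (1 + Z.of_nat n + Z.of_nat i) (2 + Z.of_nat n)); [lia|].
  cbn [andb]. destruct (Z.leb_spec (2 + Z.of_nat n) (1 + Z.of_nat n + Z.of_nat i)); [|lia].
  destruct (Z.ltb_spec (1 + Z.of_nat n + Z.of_nat i) (2 + 2 * Z.of_nat n)); [|lia]. cbn [andb]. f_equal. lia. Qed.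

Definition RowCtx n L x r (m : mem) (K i : nat) :=
  Consts n L m /\ HeapDP n L x r m (Z.of_nat K * Wz n + Z.of_nat i) /\ m RK = Z.of_nat K /\
  m RCOL = T0 n + 2 * (Z.of_nat K * Wz n) /\ m RI = Z.of_nat i /\ m RXA = 1 + Z.of_nat i /\
  m RRA = 1 + Z.of_nat n + Z.of_nat i /\ m RRP = T0 n + 2 * (Z.of_nat K * Wz n + Z.of_nat i - 1).

Definition PresE (m m' : mem) := forall a, (0 <= a \/ a = RN \/ a = RL \/ a = RW2 \/ a = RONE \/ a = RZ \/ a = RK \/
   a = RCOL \/ a = RI \/ a = RXA \/ a = RRA \/ a = RRP \/ a = RXI \/ a = RRI) -> m' a = m a.

Definition PresRC (m m' : mem) := forall a, (0 <= a \/ a = RN \/ a = RL \/ a = RW2 \/ a = RONE \/ a = RZ \/ a = RK \/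
   a = RCOL \/ a = RI \/ a = RXA \/ a = RRA \/ a = RRP) -> m' a = m a.

Lemma presE_RC m m' : PresE m m' -> PresRC m m'.
Proof. intros E a Ha. apply E. lia. Qed.

Lemma rowctx_pres' n L x r m m' K i : PresRC m m' -> RowCtx n L x r m K i -> RowCtx n L x r m' K i.
Proof. intros E (C&H&H1&H2&H3&H4&H5&H6). destruct C as (C1&C2&C3&C4&C5).
  split; [repeat split; rewrite E by lia; assumption|].
  split; [eapply heap_ext; [|exact H]; intros a Ha; apply E; lia|].
  repeat split; rewrite E by lia; assumption. Qed.

Lemma rowctx_pres n L x r m m' K i : PresE m m' -> RowCtx n L x r m K i -> RowCtx n L x r m' K i.
Proof. intros E. apply rowctx_pres'. apply presE_RC; auto. Qed.

Definition EInv n L x r (m : mem) (K i e : nat) :=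
  RowCtx n L x r m K i /\ m RXI = x (i - 1)%nat /\ m RRI = r (i - 1)%nat /\ m RE = Z.of_nat e /\
  m RCNT = Z.of_nat K + 1 - Z.of_nat e /\
  m RP = T0 n + 2 * ((Z.of_nat K - Z.of_nat e) * Wz n + Z.of_nat i - 1) /\
  (m RBEST, m RBD) = scanu (x (i - 1)%nat) (r (i - 1)%nat) (Bs x r (i - 1)) K e.

Open Scope Z_scope.

Lemma seg_a m : 0 < m RCNT -> m RZ = 0 -> exists m1, Steps 4 24 m 29 m1 /\
  m1 RF = m (m RP) /\ m1 RD = m RE /\ m1 RFL = 1 /\
  (forall a, a <> RF -> a <> RD -> a <> RFL -> m1 a = m a).
Proof. intros H HZ. eexists. split. { jy; s1; s1; s1; apply St0. }
  split; [|split; [|split]]; rd; try reflexivity. rewrite HZ; ring. intros a; intros; rd; reflexivity. Qed.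

Lemma seg_b m : 0 < m RFL -> m RZ = 0 -> m RONE = 1 -> exists m3, Steps 4 41 m 29 m3 /\
  m3 RD = - m RE /\ m3 RFL = 0 /\ (forall a, a <> RD -> a <> RFL -> m3 a = m a).
Proof. intros H HZ HO. eexists. split. { jy; s1; s1; jy; apply St0. }
  split; [|split]; rd; try reflexivity. rewrite HZ; ring. intros a; intros; rd; reflexivity. Qed.

Lemma seg_c m : m RFL <= 0 -> m RONE = 1 -> exists m5, Steps 5 41 m 24 m5 /\
  m5 RP = m RP - m RW2 /\ m5 RE = m RE + 1 /\ m5 RCNT = m RCNT - 1 /\
  (forall a, a <> RP -> a <> RE -> a <> RCNT -> m5 a = m a).
Proof. intros H HO. eexists. split. { jn; s1; s1; s1; jy; apply St0. }
  split; [|split; [|split]]; rd; try rewrite HO; try reflexivity. intros a; intros; rd; reflexivity. Qed.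

Lemma ebody n L x r m K i e : (1 <= i <= n)%nat -> (e <= K)%nat -> EInv n L x r m K i e ->
  exists k m', (k <= 35)%nat /\ Steps k 24 m 24 m' /\ EInv n L x r m' K i (S e) /\ PresE m m'.
Proof.
  intros Hi He (RC & HXI & HRI & HE & HCNT & HP & HB).
  pose proof RC as (C & HH & HK & HCOL & HI & HXA & HRA & HRP). destruct C as (C1&C2&C3&C4&C5).
  destruct (seg_a m ltac:(lia) C5) as (m1 & S1 & A1 & A2 & A3 & F1).
  destruct (chk m1 ltac:(rewrite F1 by lia; auto) ltac:(rewrite F1 by lia; auto)) as (k2 & m2 & Hk2 & S2 & B2 & F2).
  destruct (seg_b m2 ltac:(rewrite F2 by lia; lia) ltac:(rewrite F2, F1 by lia; auto) ltac:(rewrite F2, F1 by lia; auto))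
    as (m3 & S3 & A3' & A4 & F3).
  destruct (chk m3 ltac:(rewrite F3, F2, F1 by lia; auto) ltac:(rewrite F3, F2, F1 by lia; auto)) as (k4 & m4 & Hk4 & S4 & B4 & F4).
  destruct (seg_c m4 ltac:(rewrite F4 by lia; lia) ltac:(rewrite F4, F3, F2, F1 by lia; auto))
    as (m5 & S5 & A5 & A6 & A7 & F5).
  exists (4 + k2 + 4 + k4 + 5)%nat, m5. split; [lia|]. split.
  { eapply Steps_trans; [|exact S5]. eapply Steps_trans; [|exact S4]. eapply Steps_trans; [|exact S3].
    eapply Steps_trans; [|exact S2]. exact S1. }
  assert (PE: PresE m m5).
  { intros a Ha. rewrite F5, F4, F3, F2, F1 by lia. reflexivity. }
  split; [|exact PE].
  assert (HF: m (m RP) = Bs x r (i - 1) (K - e)).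
  { rewrite HP. destruct HH as (_ & H2 & _).
    replace ((Z.of_nat K - Z.of_nat e) * Wz n + Z.of_nat i - 1) with (Z.of_nat (K - e) * Wz n + Z.of_nat (i - 1)) by (rewrite !Nat2Z.inj_sub by lia; simpl; ring).
    assert (Hr: 0 <= Z.of_nat (K - e) * Wz n + Z.of_nat (i - 1) < Z.of_nat K * Wz n + Z.of_nat i).
    { split. unfold Wz; nia. 
      assert (Z.of_nat (K - e) * Wz n <= Z.of_nat K * Wz n) by (unfold Wz; nia). lia. }
    rewrite (proj1 (H2 _ Hr)). apply BV_dec. lia. }
  split; [eapply rowctx_pres; [exact PE| exact RC]|].
  split; [rewrite <- HXI; apply PE; lia|]. split; [rewrite <- HRI; apply PE; lia|].
  split. { rewrite A6, F4, F3, F2, F1, HE by lia. lia. }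
  split. { rewrite A7, F4, F3, F2, F1, HCNT by lia. lia. }
  split. { rewrite A5, !F4, !F3, !F2, !F1, HP, C3 by lia. unfold Wz. lia. }
  rewrite (F5 RBEST), (F5 RBD) by lia. rewrite B4.
  rewrite (F3 RBEST), (F3 RBD), (F3 RXI), (F3 RRI), (F3 RF), A3' by lia. rewrite B2.
  rewrite (F2 RE), (F2 RXI), (F2 RRI), (F2 RF) by lia.
  rewrite (F1 RE), (F1 RXI), (F1 RRI), (F1 RBEST), (F1 RBD) by lia. rewrite A1, A2, HF, HE, HXI, HRI.
  simpl scanu. rewrite <- HB. reflexivity.
Qed.

Lemma eloop n L x r K i : (1 <= i <= n)%nat -> forall t e m, t = (K + 1 - e)%nat -> (e <= K + 1)%nat ->
  EInv n L x r m K i e ->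
  exists k m', (k <= 35 * t + 2)%nat /\ Steps k 24 m 49 m' /\ RowCtx n L x r m' K i /\
    (m' RBEST, m' RBD) = BD x r i K /\ PresE m m'.
Proof. intros Hi t. induction t; intros e m Ht He Inv.
  - assert (e = K + 1)%nat by lia. subst e.
    pose proof Inv as (RC & HXI & HRI & HE & HCNT & HP & HB).
    pose proof RC as (C & _). destruct C as (C1&C2&C3&C4&C5).
    exists 2%nat, m. split; [lia|]. split. { jn. jy. apply St0. }
    split; auto. split; [|intros a _; auto]. rewrite HB.
    destruct i as [|i']; [lia|]. replace (K + 1)%nat with (S K) by lia. simpl. rewrite Nat.sub_0_r. reflexivity.
  - destruct (ebody n L x r m K i e Hi ltac:(lia) Inv) as (k1 & m1 & Hk1 & S1 & Inv1 & P1).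
    destruct (IHt (S e) m1 ltac:(lia) ltac:(lia) Inv1) as (k2 & m2 & Hk2 & S2 & RC2 & B2 & P2).
    exists (k1 + k2)%nat, m2. split; [lia|]. split; [eapply Steps_trans; eauto|]. split; auto. split; auto.
    intros a Ha. rewrite P2, P1; auto.
Qed.

Lemma seg_rowhead m : m RI - m RN <= 0 -> m RZ = 0 -> m RONE = 1 -> 0 <= m RXA -> 0 <= m RRA -> 0 <= m RRP -> exists m1, Steps 9 15 m 24 m1 /\
  m1 RXI = m (m RXA) /\ m1 RRI = m (m RRA) /\ m1 RBEST = m (m RRP) /\ m1 RBD = 0 /\
  m1 RP = m RRP /\ m1 RE = 0 /\ m1 RCNT = m RK + 1 /\
  (forall a, a <> RT -> a <> RXI -> a <> RRI -> a <> RBEST -> a <> RBD -> a <> RP -> a <> RE -> a <> RCNT -> m1 a = m a).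
Proof. intros H HZ HO H1 H2 H3. eexists. split. { s1; jn; s1; s1; s1; s1; s1; s1; s1; apply St0. }
  repeat split; rd; try rewrite HZ; try rewrite HO; try ring. intros a; intros; rd; reflexivity. Qed.

Lemma seg_rowend m : m RONE = 1 -> 0 <= m RRP -> exists m1, Steps 9 49 m 15 m1 /\
  m1 (m RRP + 2) = m RBEST /\ m1 (m RRP + 3) = m RBD /\ m1 RRP = m RRP + 2 /\
  m1 RI = m RI + 1 /\ m1 RXA = m RXA + 1 /\ m1 RRA = m RRA + 1 /\
  (forall a, a <> m RRP + 2 -> a <> m RRP + 3 -> a <> RRP -> a <> RA -> a <> RI -> a <> RXA -> a <> RRA -> m1 a = m a).
Proof. intros HO H. eexists. split. { s1; s1; s1; s1; s1; s1; s1; s1; jy; apply St0. }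
  rd. rewrite HO. repeat split; rd; try ring. intros a; intros; rd; reflexivity. Qed.

Open Scope Z_scope.

Lemma row n L x r K i m : (1 <= i <= n)%nat -> RowCtx n L x r m K i ->
  exists k m', (k <= 35 * (K + 1) + 20)%nat /\ Steps k 15 m 15 m' /\ RowCtx n L x r m' K (S i).
Proof.
  intros Hi RC. pose proof RC as (C & HH & HK & HCOL & HI & HXA & HRA & HRP). destruct C as (C1&C2&C3&C4&C5).
  assert (HW: 1 <= Wz n) by (unfold Wz; lia).
  assert (HT: 2 <= T0 n) by (unfold T0; lia).
  assert (HKW: 0 <= Z.of_nat K * Wz n) by nia.
  destruct (seg_rowhead m ltac:(lia) C5 C4 ltac:(lia) ltac:(lia) ltac:(lia))
    as (m1 & S1 & A1 & A2 & A3 & A4 & A5 & A6 & A7 & F1).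
  destruct HH as (H1 & H2 & H3).
  assert (Inv1: EInv n L x r m1 K i 0).
  { split. eapply rowctx_pres'; [|exact RC]. intros a Ha. apply F1; lia.
    split. rewrite A1, HXA, H1 by (unfold T0; lia). apply init_x; lia.
    split. rewrite A2, HRA, H1 by (unfold T0; lia). apply init_r; lia.
    split. rewrite A6. reflexivity.
    split. rewrite A7, HK. lia.
    split. rewrite A5, HRP. lia.
    simpl. rewrite A3, A4, HRP.
    replace (Z.of_nat K * Wz n + Z.of_nat i - 1) with (Z.of_nat K * Wz n + Z.of_nat (i - 1)) by lia.
    rewrite (proj1 (H2 (Z.of_nat K * Wz n + Z.of_nat (i - 1)) ltac:(lia))). rewrite BV_dec by lia. reflexivity. }
  destruct (eloop n L x r K i Hi (K + 1) 0 m1 ltac:(lia) ltac:(lia) Inv1) as (k2 & m2 & Hk2 & S2 & RC2 & B2 & P2).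
  pose proof RC2 as (C' & HH2 & HK2 & HCOL2 & HI2 & HXA2 & HRA2 & HRP2). destruct C' as (C1'&C2'&C3'&C4'&C5').
  destruct (seg_rowend m2 C4' ltac:(lia)) as (m3 & S3 & B3 & B3' & A8 & A9 & A10 & A11 & F3).
  exists (9 + k2 + 9)%nat, m3. split; [lia|]. split.
  { eapply Steps_trans; [|exact S3]. eapply Steps_trans; [exact S1|exact S2]. }
  set (p := m2 RRP + 2) in *.
  assert (Hp: p = T0 n + 2 * (Z.of_nat K * Wz n + Z.of_nat i)) by (unfold p; lia).
  replace (m2 RRP + 3) with (p + 1) in * by (unfold p; lia).
  destruct HH2 as (G1 & G2 & G3).
  split; [repeat split; rewrite F3 by lia; assumption|].
  split.
  { split; [|split].
    - intros a Ha. rewrite F3 by lia. auto.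
    - intros j Hj. destruct (Z.eq_dec j (Z.of_nat K * Wz n + Z.of_nat i)) as [->|Hne].
      + rewrite <- Hp. rewrite B3, B3'. rewrite BV_dec, DV_dec by lia.
        unfold Bs, Ds. rewrite <- B2. auto.
      + rewrite !F3 by lia. apply G2. lia.
    - intros a Ha Ha'. rewrite F3 by lia. apply G3; lia. }
  repeat split; try rewrite F3 by lia; try assumption.
  - rewrite A9, HI2. lia.
  - rewrite A10, HXA2. lia.
  - rewrite A11, HRA2. lia.
  - rewrite A8. lia.
Qed.

Lemma rows n L x r K : forall t i m, t = (n + 1 - i)%nat -> (1 <= i <= n + 1)%nat -> RowCtx n L x r m K i ->
  exists k m', (k <= t * (35 * (K + 1) + 20) + 2)%nat /\ Steps k 15 m 58 m' /\ RowCtx n L x r m' K (n + 1).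
Proof. induction t; intros i m Ht Hi RC.
  - assert (i = n + 1)%nat by lia. subst i.
    pose proof RC as (C & HH & HK & HCOL & HI & HXA & HRA & HRP). destruct C as (C1&C2&C3&C4&C5).
    eexists; eexists. split; [|split]. 2:{ s1; jy. apply St0. } lia.
    eapply rowctx_pres'; [|exact RC]. intros a Ha. rd. reflexivity.
  - destruct (row n L x r K i m ltac:(lia) RC) as (k1 & m1 & Hk1 & S1 & RC1).
    destruct (IHt (S i) m1 ltac:(lia) ltac:(lia) RC1) as (k2 & m2 & Hk2 & S2 & RC2).
    exists (k1 + k2)%nat, m2. split; [|split]; auto. lia. eapply Steps_trans; eauto.
Qed.

Definition ColInv n L x r (m : mem) (K : nat) :=
  Consts n L m /\ HeapDP n L x r m (Z.of_nat K * Wz n) /\ m RK = Z.of_nat K /\ m RCOL = T0 n + 2 * (Z.of_nat K * Wz n).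

Lemma column n L x r K m : (1 <= n)%nat -> ColInv n L x r m K ->
  exists k m', (k <= n * (35 * (K + 1) + 20) + 6)%nat /\ Steps k 11 m 58 m' /\ RowCtx n L x r m' K (n + 1).
Proof.
  intros Hn (C & HH & HK & HCOL). pose proof C as (C1&C2&C3&C4&C5).
  assert (HW: 1 <= Wz n) by (unfold Wz; lia).
  assert (HKW: 0 <= Z.of_nat K * Wz n) by nia.
  assert (HT: 2 <= T0 n) by (unfold T0; lia).
  set (m1 := upd (upd (upd (upd m RI 1) RXA (upd m RI 1 RONE + upd m RI 1 RONE))
     RRA (upd (upd m RI 1) RXA (upd m RI 1 RONE + upd m RI 1 RONE) RXA + upd (upd m RI 1) RXA (upd m RI 1 RONE + upd m RI 1 RONE) RN))
     RRP (upd (upd (upd m RI 1) RXA (upd m RI 1 RONE + upd m RI 1 RONE))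
     RRA (upd (upd m RI 1) RXA (upd m RI 1 RONE + upd m RI 1 RONE) RXA + upd (upd m RI 1) RXA (upd m RI 1 RONE + upd m RI 1 RONE) RN) RCOL +
     upd (upd (upd m RI 1) RXA (upd m RI 1 RONE + upd m RI 1 RONE))
     RRA (upd (upd m RI 1) RXA (upd m RI 1 RONE + upd m RI 1 RONE) RXA + upd (upd m RI 1) RXA (upd m RI 1 RONE + upd m RI 1 RONE) RN) RZ)).
  assert (S1: Steps 4 11 m 15 m1). { s1; s1; s1; s1; apply St0. }
  assert (RC1: RowCtx n L x r m1 K 1).
  { destruct HH as (H1 & H2 & H3).
    unfold m1. split; [repeat split; rd; assumption|]. split.
    - split; [|split].
      + intros a Ha. rd. auto.
      + intros j Hj. rd. destruct (Z.eq_dec j (Z.of_nat K * Wz n)) as [->|Hne].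
        * replace (Z.of_nat K * Wz n) with (Z.of_nat K * Wz n + Z.of_nat 0) by lia.
          rewrite BV_dec, DV_dec by lia. rd. rewrite !H3 by lia. unfold Bs, Ds. simpl. auto.
        * apply H2. lia.
      + intros a Ha Ha'. rd. apply H3; lia.
    - repeat split; rd; try lia. }
  destruct (rows n L x r K n 1 m1 ltac:(lia) ltac:(lia) RC1) as (k2 & m2 & Hk2 & S2 & RC2).
  exists (4 + k2)%nat, m2. split; [nia|]. split; auto. eapply Steps_trans; eauto.
Qed.

Lemma seg_next m : 0 <= m RRP -> 0 < m RL - m (m RRP) -> m RONE = 1 -> exists m1, Steps 6 58 m 11 m1 /\
  m1 RK = m RK + 1 /\ m1 RCOL = m RCOL + m RW2 /\
  (forall a, a <> RV -> a <> RT -> a <> RK -> a <> RCOL -> m1 a = m a).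
Proof. intros H1 H2 HO. eexists. split. { s1; s1; jy; s1; s1; jy; apply St0. }
  repeat split; rd; try rewrite HO; try ring. intros a; intros; rd; reflexivity. Qed.

Lemma seg_stop m : 0 <= m RRP -> m RL - m (m RRP) <= 0 -> m RONE = 1 -> exists m1, Steps 4 58 m 65 m1 /\
  (forall a, a <> RV -> a <> RT -> m1 a = m a).
Proof. intros H1 H2 HO. eexists. split. { s1; s1; jn; jy; apply St0. }
  intros a; intros; rd; reflexivity. Qed.

Lemma rowctx_top n L x r m K : RowCtx n L x r m K (n + 1) -> m (m RRP) = Bs x r n K.
Proof. intros (C & (H1&H2&H3) & HK & HCOL & HI & HXA & HRA & HRP).
  assert (HW: 1 <= Wz n) by (unfold Wz; lia). assert (HKW: 0 <= Z.of_nat K * Wz n) by nia.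
  rewrite HRP. replace (Z.of_nat K * Wz n + Z.of_nat (n + 1) - 1) with (Z.of_nat K * Wz n + Z.of_nat n) by lia.
  rewrite (proj1 (H2 (Z.of_nat K * Wz n + Z.of_nat n) ltac:(lia))). apply BV_dec. lia. Qed.

Definition colB (n K : nat) : nat := (n * (35 * (K + 1) + 20) + 12)%nat.

Lemma colloop n L x r c0 : (1 <= n)%nat -> (L <= Bs x r n c0) ->
  forall t K m, t = (c0 - K)%nat -> (K <= c0)%nat -> ColInv n L x r m K ->
  exists k m' Kf, (K <= Kf <= c0)%nat /\ L <= Bs x r n Kf /\ (forall K', (K <= K' < Kf)%nat -> Bs x r n K' < L) /\
    (k <= (Kf + 1 - K) * colB n Kf)%nat /\ Steps k 11 m 65 m' /\ RowCtx n L x r m' Kf (n + 1).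
Proof. intros Hn Hc0. induction t; intros K m Ht HK CI.
  - assert (K = c0) by lia. subst K.
    destruct (column n L x r c0 m Hn CI) as (k1 & m1 & Hk1 & S1 & RC1).
    pose proof (rowctx_top _ _ _ _ _ _ RC1) as Top.
    pose proof RC1 as (C & _ & _ & _ & _ & _ & _ & HRP). destruct C as (C1&C2&C3&C4&C5).
    destruct (seg_stop m1 ltac:(rewrite HRP; unfold T0, Wz; nia) ltac:(rewrite Top, C2; lia) C4) as (m2 & S2 & F2).
    exists (k1 + 4)%nat, m2, c0. split; [lia|]. split; auto. split; [intros; lia|]. split.
    unfold colB. nia. split. eapply Steps_trans; eauto.
    eapply rowctx_pres'; [|exact RC1]. intros a Ha. apply F2; lia.
  - destruct (column n L x r K m Hn CI) as (k1 & m1 & Hk1 & S1 & RC1).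
    pose proof (rowctx_top _ _ _ _ _ _ RC1) as Top.
    pose proof RC1 as (C & HH & HK1 & HCOL1 & _ & _ & _ & HRP). destruct C as (C1&C2&C3&C4&C5).
    destruct (Z_le_gt_dec L (Bs x r n K)) as [Hs|Hg].
    + destruct (seg_stop m1 ltac:(rewrite HRP; unfold T0, Wz; nia) ltac:(rewrite Top, C2; lia) C4) as (m2 & S2 & F2).
      exists (k1 + 4)%nat, m2, K. split; [lia|]. split; auto. split; [intros; lia|]. split.
      unfold colB. nia. split. eapply Steps_trans; eauto.
      eapply rowctx_pres'; [|exact RC1]. intros a Ha. apply F2; lia.
    + destruct (seg_next m1 ltac:(rewrite HRP; unfold T0, Wz; nia) ltac:(rewrite Top, C2; lia) C4) as (m2 & S2 & A1 & A2 & F2).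
      assert (CI2: ColInv n L x r m2 (S K)).
      { split. repeat split; rewrite F2 by lia; assumption.
        split. eapply heap_ext; [intros a Ha; apply F2; lia|].
        replace (Z.of_nat (S K) * Wz n) with (Z.of_nat K * Wz n + Z.of_nat (n + 1)) by (unfold Wz; lia). exact HH.
        split. rewrite A1, HK1. lia. rewrite A2, HCOL1, C3. unfold Wz; lia. }
      destruct (IHt (S K) m2 ltac:(lia) ltac:(assert (K <> c0) by (intro; subst; lia); lia) CI2)
        as (k3 & m3 & Kf & HKf & HL & Hbelow & Hk3 & S3 & RC3).
      exists (k1 + 6 + k3)%nat, m3, Kf. split; [lia|]. split; auto. split.
      intros K' HK'. destruct (Nat.eq_dec K' K) as [->|]; [lia|]. apply Hbelow; lia.
      split. assert (colB n K <= colB n Kf)%nat by (unfold colB; nia). unfold colB in *. nia.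
      split; auto. eapply Steps_trans; [eapply Steps_trans; [exact S1|exact S2]|exact S3].
Qed.

Open Scope Z_scope.

Lemma seg_top m : 0 < m RI -> 2 <= m RQ -> m RONE = 1 -> exists m1, Steps 6 70 m 77 m1 /\
  m1 RT = m (m RQ) - m (m RQ - 2) /\ (forall a, a <> RV -> a <> RA -> a <> RT -> m1 a = m a).
Proof. intros H1 H2 HO. eexists. split. { jy; s1; s1; s1; s1; s1; apply St0. }
  split; rd. rewrite HO. replace (m RQ - 1 - 1) with (m RQ - 2) by ring. reflexivity. intros a; intros; rd; reflexivity. Qed.

Lemma seg_skip m : m RT <= 0 -> m RONE = 1 -> 0 <= m RXA -> exists m1, Steps 3 77 m 91 m1 /\
  m1 RY = m (m RXA) /\ (forall a, a <> RY -> m1 a = m a).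
Proof. intros H1 H2 H3. eexists. split. { jn; s1; jy; apply St0. }
  split; rd. reflexivity. intros a; intros; rd; reflexivity. Qed.

Lemma seg_used m : 0 < m RT -> m RZ = 0 -> m RONE = 1 -> 0 <= m RXA -> 0 <= m RQ -> exists k m1, (k <= 7)%nat /\ Steps k 77 m 86 m1 /\
  m1 RY = m (m RXA) + m (m RQ + 1) /\ m1 RD = Z.abs (m (m RQ + 1)) /\
  (forall a, a <> RY -> a <> RA -> a <> RD -> m1 a = m a).
Proof. intros H1 HZ HO H3 H4.
  destruct (Z_lt_le_dec 0 (m (m RQ + m RONE))) as [Hp|Hn].
  - do 2 eexists. split; [|split]. 2:{ jy; s1; s1; s1; s1; jy; apply St0. } lia.
    rd. rewrite HO in *. split; [reflexivity|]. split. rewrite Z.abs_eq; lia. intros a; intros; rd; reflexivity.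
  - do 2 eexists. split; [|split]. 2:{ jy; s1; s1; s1; s1; jn; s1; apply St0. } lia.
    rd. rewrite HO in *. split; [reflexivity|]. split. rewrite HZ, Z.abs_neq; lia. intros a; intros; rd; reflexivity.
Qed.

Lemma seg_mloop : forall t m, m RD = Z.of_nat t -> m RONE = 1 -> exists m1, Steps (4 * t + 2) 86 m 91 m1 /\
  m1 RQ = m RQ - Z.of_nat t * m RW2 /\ (forall a, a <> RQ -> a <> RD -> m1 a = m a).
Proof. induction t; intros m HD HO.
  - eexists. split. { jn; jy; apply St0. } split. lia. intros; reflexivity.
  - set (m2 := upd (upd m RQ (m RQ - m RW2)) RD (upd m RQ (m RQ - m RW2) RD - upd m RQ (m RQ - m RW2) RONE)).
    assert (S1: Steps 4 86 m 86 m2). { jy; s1; s1; jy; apply St0. }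
    destruct (IHt m2 ltac:(unfold m2; rd; lia) ltac:(unfold m2; rd; lia)) as (m3 & S3 & A3 & F3).
    exists m3. split. replace (4 * S t + 2)%nat with (4 + (4 * t + 2))%nat by lia. eapply Steps_trans; eauto.
    split. rewrite A3. unfold m2. rd. lia. intros a H1 H2. rewrite F3 by auto. unfold m2. rd. reflexivity.
Qed.

Lemma seg_write m : m RONE = 1 -> 0 <= m ROA -> exists m1, Steps 7 91 m 70 m1 /\
  m1 (m ROA) = m RY /\ m1 RQ = m RQ - 2 /\ m1 ROA = m ROA - 1 /\ m1 RXA = m RXA - 1 /\ m1 RI = m RI - 1 /\
  (forall a, a <> m ROA -> a <> RQ -> a <> ROA -> a <> RXA -> a <> RI -> m1 a = m a).
Proof. intros HO H. eexists. split. { s1; s1; s1; s1; s1; s1; jy; apply St0. }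
  rd. rewrite HO. repeat split; rd; try ring. intros a; intros; rd; reflexivity. Qed.

Definition BackInv n L x r (Kf : nat) (m : mem) (i c : nat) :=
  Consts n L m /\ (forall a, 0 <= a < 2 + 2 * Z.of_nat n -> m a = init_mem n L x r a) /\
  (forall j, 0 <= j < Z.of_nat Kf * Wz n + Z.of_nat n + 1 -> m (T0 n + 2 * j) = BV n x r j /\ m (T0 n + 2 * j + 1) = DV n x r j) /\
  (forall j, (i <= j < n)%nat -> m (2 + 2 * Z.of_nat n + Z.of_nat j) = recon x r n Kf j) /\
  m RI = Z.of_nat i /\ m RQ = T0 n + 2 * (Z.of_nat c * Wz n + Z.of_nat i) /\
  m ROA = 1 + 2 * Z.of_nat n + Z.of_nat i /\ m RXA = 1 + Z.of_nat i /\ (c <= Kf)%nat /\ (i <= n)%nat /\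
  (forall j, (j < i)%nat -> recon x r n Kf j = recon x r i c j).

Lemma bstep n L x r Kf m i c : (1 <= i)%nat -> BackInv n L x r Kf m i c ->
  exists k m' c', (c' <= c)%nat /\ (k <= 22 + 4 * (c - c'))%nat /\ Steps k 70 m 70 m' /\ BackInv n L x r Kf m' (i - 1) c'.
Proof.
  intros Hi (C & Hin & Htab & Hout & HI & HQ & HOA & HXA & Hc & Hin2 & Hcons).
  pose proof C as (C1&C2&C3&C4&C5).
  assert (HW: 1 <= Wz n) by (unfold Wz; lia). assert (HT: 2 <= T0 n) by (unfold T0; lia).
  assert (HT0: T0 n = 3 * Z.of_nat n + 2) by reflexivity.
  assert (HcW: 0 <= Z.of_nat c * Wz n) by nia.
  assert (HcK: Z.of_nat c * Wz n <= Z.of_nat Kf * Wz n) by nia.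
  destruct (seg_top m ltac:(lia) ltac:(lia) C4) as (m1 & S1 & A1 & F1).
  assert (EV: m (m RQ) = Bs x r i c).
  { rewrite HQ. rewrite (proj1 (Htab (Z.of_nat c * Wz n + Z.of_nat i) ltac:(lia))). apply BV_dec; lia. }
  assert (ET: m (m RQ - 2) = Bs x r (i - 1) c).
  { rewrite HQ. replace (T0 n + 2 * (Z.of_nat c * Wz n + Z.of_nat i) - 2) with (T0 n + 2 * (Z.of_nat c * Wz n + Z.of_nat (i - 1))) by lia.
    rewrite (proj1 (Htab (Z.of_nat c * Wz n + Z.of_nat (i - 1)) ltac:(lia))). apply BV_dec; lia. }
  assert (EX: m (m RXA) = x (i - 1)%nat). { rewrite HXA, Hin by lia. apply init_x; lia. }
  assert (Hi': i = S (i - 1)) by lia.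
  pose proof (P1 x r (i - 1) c) as HP1. rewrite <- Hi' in HP1.
  destruct (Z.eq_dec (Bs x r i c) (Bs x r (i - 1) c)) as [Eq|Ne].
  -
    destruct (seg_skip m1 ltac:(rewrite A1, EV, ET; lia) ltac:(rewrite F1 by lia; auto) ltac:(rewrite F1 by lia; lia))
      as (m2 & S2 & A2 & F2).
    destruct (seg_write m2 ltac:(rewrite F2, F1 by lia; auto) ltac:(rewrite F2, F1 by lia; lia))
      as (m3 & S3 & B1 & B2 & B3 & B4 & B5 & F3).
    assert (Eoa: m2 ROA = 1 + 2 * Z.of_nat n + Z.of_nat i) by (rewrite F2, F1 by lia; auto).
    rewrite Eoa in *.
    assert (Hy: m2 RY = recon x r i c (i - 1)).
    { rewrite A2. rewrite (F1 RXA) by lia. rewrite F1 by lia. rewrite EX.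
      rewrite Hi' at 2. simpl. destruct (Z.eq_dec _ _) as [_|N]; [|rewrite <- Hi' in N; congruence].
      rewrite recon_ge by lia. reflexivity. }
    exists (6 + 3 + 7)%nat, m3, c. split; [lia|]. split; [lia|]. split.
    { eapply Steps_trans; [eapply Steps_trans; [exact S1|exact S2]|exact S3]. }
    split; [repeat split; rewrite F3, F2, F1 by lia; assumption|].
    split. { intros a Ha. rewrite F3, F2, F1 by lia. auto. }
    split. { intros j Hj. rewrite !F3, !F2, !F1 by lia. auto. }
    split. { intros j Hj. destruct (Nat.eq_dec j (i - 1)) as [->|Hne].
      - replace (2 + 2 * Z.of_nat n + Z.of_nat (i - 1)) with (1 + 2 * Z.of_nat n + Z.of_nat i) by lia.
        rewrite B1, Hy. symmetry. apply Hcons. lia.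
      - rewrite F3, F2, F1 by lia. apply Hout. lia. }
    split. { rewrite B5, (F2 RI), (F1 RI), HI by lia. lia. }
    split. { rewrite B2, (F2 RQ), (F1 RQ), HQ by lia. lia. }
    split. { rewrite B3. lia. }
    split. { rewrite B4, (F2 RXA), (F1 RXA), HXA by lia. lia. }
    split; [lia|]. split; [lia|].
    intros j Hj. rewrite Hcons by lia. rewrite Hi' at 1. simpl. destruct (Z.eq_dec _ _) as [_|N]; [|rewrite <- Hi' in N; congruence].
    reflexivity.
  -
    pose proof (P3 x r (i - 1) c ltac:(rewrite <- Hi'; exact Ne)) as (Hd & V & Eq). rewrite <- Hi' in *.
    set (d := Ds x r i c) in *.
    assert (ED: m (m RQ + 1) = d).
    { rewrite HQ. rewrite (proj2 (Htab (Z.of_nat c * Wz n + Z.of_nat i) ltac:(lia))). apply DV_dec; lia. }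
    destruct (seg_used m1 ltac:(rewrite A1, EV, ET; lia) ltac:(rewrite F1 by lia; auto) ltac:(rewrite F1 by lia; auto)
      ltac:(rewrite F1 by lia; lia) ltac:(rewrite F1 by lia; lia)) as (k2 & m2 & Hk2 & S2 & A2 & A3 & F2).
    rewrite (F1 RXA), (F1 RQ) in A2 by lia. rewrite (F1 (m RXA)), (F1 (m RQ + 1)) in A2 by lia.
    rewrite (F1 RQ) in A3 by lia. rewrite (F1 (m RQ + 1)) in A3 by lia. rewrite EX, ED in A2. rewrite ED in A3.
    destruct (seg_mloop (Z.abs_nat d) m2 ltac:(rewrite A3; lia) ltac:(rewrite F2, F1 by lia; auto)) as (m3 & S3 & A4 & F3).
    destruct (seg_write m3 ltac:(rewrite F3, F2, F1 by lia; auto) ltac:(rewrite F3, F2, F1 by lia; lia))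
      as (m4 & S4 & B1 & B2 & B3 & B4 & B5 & F4).
    assert (Eoa: m3 ROA = 1 + 2 * Z.of_nat n + Z.of_nat i) by (rewrite F3, F2, F1 by lia; auto).
    rewrite Eoa in *.
    set (c' := (c - Z.abs_nat d)%nat).
    assert (Hy: m3 RY = recon x r i c (i - 1)).
    { rewrite F3 by lia. rewrite A2.
      rewrite Hi' at 2. simpl. destruct (Z.eq_dec _ _) as [N|_]; [rewrite <- Hi' in N; congruence|].
      destruct (Nat.eq_dec (i - 1) (i - 1)); [|congruence]. rewrite <- Hi'. reflexivity. }
    exists (6 + k2 + (4 * Z.abs_nat d + 2) + 7)%nat, m4, c'. split; [lia|]. split; [unfold c'; lia|]. split.
    { eapply Steps_trans; [eapply Steps_trans; [eapply Steps_trans; [exact S1|exact S2]|exact S3]|exact S4]. }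
    split; [repeat split; rewrite F4, F3, F2, F1 by lia; assumption|].
    split. { intros a Ha. rewrite F4, F3, F2, F1 by lia. auto. }
    split. { intros j Hj. rewrite !F4, !F3, !F2, !F1 by lia. auto. }
    split. { intros j Hj. destruct (Nat.eq_dec j (i - 1)) as [->|Hne].
      - replace (2 + 2 * Z.of_nat n + Z.of_nat (i - 1)) with (1 + 2 * Z.of_nat n + Z.of_nat i) by lia.
        rewrite B1, Hy. symmetry. apply Hcons. lia.
      - rewrite F4, F3, F2, F1 by lia. apply Hout. lia. }
    split. { rewrite B5, (F3 RI), (F2 RI), (F1 RI), HI by lia. lia. }
    split. { rewrite B2, A4, (F2 RQ), (F1 RQ), HQ, (F2 RW2), (F1 RW2), C3 by lia. unfold c'. rewrite Nat2Z.inj_sub by lia.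
             rewrite (Nat2Z.inj_sub i 1) by lia. simpl Z.of_nat. ring. }
    split. { rewrite B3. lia. }
    split. { rewrite B4, (F3 RXA), (F2 RXA), (F1 RXA), HXA by lia. lia. }
    split; [unfold c'; lia|]. split; [lia|].
    intros j Hj. rewrite Hcons by lia. rewrite Hi' at 1. simpl. destruct (Z.eq_dec _ _) as [N|_]; [rewrite <- Hi' in N; congruence|].
    destruct (Nat.eq_dec j (i - 1)); [lia|]. rewrite <- Hi'. reflexivity.
Qed.

Lemma bloop n L x r Kf : forall i m c, BackInv n L x r Kf m i c ->
  exists k m', (k <= 22 * i + 4 * c + 1)%nat /\ Steps k 70 m 71 m' /\
    (forall j, (j < n)%nat -> m' (2 + 2 * Z.of_nat n + Z.of_nat j) = recon x r n Kf j) /\ step prog 71 m' = None.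
Proof. induction i; intros m c BI.
  - pose proof BI as (C & Hin & Htab & Hout & HI & _).
    exists 1%nat, m. split; [lia|]. split. { jn; apply St0. }
    split. intros j Hj. apply Hout. lia. reflexivity.
  - destruct (bstep n L x r Kf m (S i) c ltac:(lia) BI) as (k1 & m1 & c' & Hc' & Hk1 & S1 & BI1).
    replace (S i - 1)%nat with i in BI1 by lia.
    destruct (IHi m1 c' BI1) as (k2 & m2 & Hk2 & S2 & Out & Halt).
    exists (k1 + k2)%nat, m2. split; [lia|]. split; [eapply Steps_trans; eauto|]. auto.
Qed.

Lemma seg_back n L x r Kf m : RowCtx n L x r m Kf (n + 1) -> exists m1, Steps 5 65 m 70 m1 /\ BackInv n L x r Kf m1 n Kf.
Proof.
  intros (C & (H1&H2&H3) & HK & HCOL & HI & HXA & HRA & HRP). pose proof C as (C1&C2&C3&C4&C5).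
  assert (HT0: T0 n = 3 * Z.of_nat n + 2) by reflexivity.
  assert (HWz: Wz n = Z.of_nat n + 1) by reflexivity.
  eexists. split. { s1; s1; s1; s1; s1; apply St0. }
  split; [repeat split; rd; assumption|].
  split. { intros a Ha. rd. apply H1. lia. }
  split. { intros j Hj. rd. apply H2. lia. }
  split. { intros j Hj. lia. }
  repeat split; rd; try lia. Qed.

Lemma init_zero n L x r a : 2 + 2 * Z.of_nat n <= a -> init_mem n L x r a = 0.
Proof. intros H. unfold init_mem.
  destruct (Z.eqb_spec a 0); [lia|]. destruct (Z.eqb_spec a 1); [lia|].
  destruct (Z.leb_spec 2 a); destruct (Z.ltb_spec a (2 + Z.of_nat n)); try lia; cbn [andb].
  destruct (Z.leb_spec (2 + Z.of_nat n) a); destruct (Z.ltb_spec a (2 + 2 * Z.of_nat n)); try lia; reflexivity. Qed.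

Lemma seg_init n L x r : exists m1, Steps 11 0 (init_mem n L x r) 11 m1 /\ ColInv n L x r m1 0.
Proof.
  assert (HT0: T0 n = 3 * Z.of_nat n + 2) by reflexivity.
  assert (HWz: Wz n = Z.of_nat n + 1) by reflexivity.
  assert (I0: init_mem n L x r 0 = Z.of_nat n) by reflexivity.
  assert (I1: init_mem n L x r 1 = L) by reflexivity.
  eexists. split. { s1; s1; s1; s1; s1; s1; s1; s1; s1; s1; s1; apply St0. }
  rd. rewrite I0, I1.
  split. { repeat split; rd; try rewrite I0; try rewrite I1; try reflexivity; rewrite HWz; lia. }
  split. { split; [|split].
    - intros a Ha. rd. reflexivity.
    - intros j Hj. lia.
    - intros a Ha Ha'. rd. apply init_zero. lia. }
  split; rd; try reflexivity. rewrite ?I0. rewrite HT0. simpl Z.of_nat. lia. Qed.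

From Coquelicot Require Import Coquelicot.
Open Scope R_scope.

Lemma term_int (y0 : R) (x0 : Z) :
  is_RInt (fun th => Rabs (IZR (Int_part (y0 + th)) - IZR x0)) 0 1 (Rabs (y0 - IZR x0)).
Proof.
  set (z := Int_part y0). set (f := y0 - IZR z). set (a := 1 - f).
  pose proof (fl_le y0) as Hz1. pose proof (fl_gt y0) as Hz2. fold z in Hz1, Hz2.
  assert (Ha: 0 < a <= 1) by (unfold a, f; lra).
  assert (I1: is_RInt (fun th => Rabs (IZR (Int_part (y0 + th)) - IZR x0)) 0 a (scal (a - 0) (Rabs (IZR z - IZR x0)))).
  { eapply is_RInt_ext; [|apply (@is_RInt_const R_NormedModule)]. intros t Ht. simpl.
    rewrite Rmin_left in Ht by lra. rewrite Rmax_right in Ht by lra.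
    rewrite (fl_spec z) by (unfold a, f in Ht; lra). reflexivity. }
  assert (I2: is_RInt (fun th => Rabs (IZR (Int_part (y0 + th)) - IZR x0)) a 1 (scal (1 - a) (Rabs (IZR (z+1) - IZR x0)))).
  { eapply is_RInt_ext; [|apply (@is_RInt_const R_NormedModule)]. intros t Ht. simpl.
    rewrite Rmin_left in Ht by lra. rewrite Rmax_right in Ht by lra.
    rewrite (fl_spec (z+1)) by (rewrite plus_IZR; unfold a, f in Ht; lra). reflexivity. }
  pose proof (is_RInt_Chasles _ _ _ _ _ _ I1 I2) as I.
  assert (E: (a - 0) * (Rabs (IZR z - IZR x0)) + (1 - a) * (Rabs (IZR (z+1) - IZR x0)) = Rabs (y0 - IZR x0)).
  { rewrite plus_IZR. unfold a, f.
    destruct (Z_le_gt_dec x0 z) as [H|H].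
    - apply IZR_le in H. rewrite !Rabs_right by lra. ring.
    - assert (IZR z + 1 <= IZR x0) by (rewrite <- plus_IZR; apply IZR_le; lia).
      rewrite !Rabs_left1 by lra. ring. }
  rewrite <- E. exact I.
Qed.

Lemma sum_int (x : nat -> Z) (y : nat -> R) n :
  is_RInt (fun th => cost_upto n (fun j => IZR (x j)) (fun j => IZR (Int_part (y j + th)))) 0 1
          (cost_upto n (fun j => IZR (x j)) y).
Proof. induction n; simpl.
  - pose proof (@is_RInt_const R_NormedModule 0 1 0) as H0.
    assert (E0: forall v : R, v = (1 - 0) * 0 -> is_RInt (fun _ : R => 0) 0 1 v) by (intros v ->; exact H0).
    specialize (E0 0 ltac:(ring)). clear H0. rename E0 into H0.
    eapply is_RInt_ext; [|exact H0]. intros; reflexivity.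
  - pose proof (is_RInt_plus _ _ _ _ _ _ IHn (term_int (y n) (x n))) as H. exact H.
Qed.

Lemma kth_cost (x : nat -> Z) (y : nat -> R) th n :
  INR (kth x y th n) = cost_upto n (fun j => IZR (x j)) (fun j => IZR (Int_part (y j + th))).
Proof. induction n; simpl; auto. rewrite plus_INR, IHn. f_equal.
  rewrite INR_IZR_INZ, Zabs2Nat.id_abs, abs_IZR, minus_IZR. reflexivity. Qed.

Lemma averaging (x : nat -> Z) (y : nat -> R) n :
  exists th, 0 <= th < 1 /\ INR (kth x y th n) <= cost_upto n (fun j => IZR (x j)) y.
Proof.
  apply NNPP. intros N.
  set (C := cost_upto n (fun j => IZR (x j)) y).
  set (M := IZR (Int_part C) + 1).
  assert (HG: forall th, 0 < th < 1 -> M <= cost_upto n (fun j => IZR (x j)) (fun j => IZR (Int_part (y j + th)))).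
  { intros th Hth. rewrite <- kth_cost. destruct (Rle_dec (INR (kth x y th n)) C) as [Hle|Hgt].
    - exfalso. apply N. exists th. split; [lra|auto].
    - apply Rnot_le_lt in Hgt. rewrite INR_IZR_INZ in *. unfold M.
      pose proof (fl_le C). assert (Int_part C < Z.of_nat (kth x y th n))%Z by (apply lt_IZR; lra).
      rewrite <- plus_IZR. apply IZR_le. lia. }
  pose proof (sum_int x y n) as I.
  assert (Hle: RInt (fun _ => M) 0 1 <= RInt (fun th => cost_upto n (fun j => IZR (x j)) (fun j => IZR (Int_part (y j + th)))) 0 1).
  { apply RInt_le. lra. apply ex_RInt_const. eexists; eauto. intros; apply HG; lra. }
  rewrite (is_RInt_unique _ _ _ _ I) in Hle. rewrite RInt_const in Hle.
  change (scal (1 - 0) M) with ((1 - 0) * M) in Hle. pose proof (fl_gt C). unfold M in Hle. fold C in Hle. lra.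
Qed.

Open Scope R_scope.

Lemma feas_ext n L (R y y' : nat -> R) : (forall j, (j < n)%nat -> y j = y' j) -> feasible n L R y -> feasible n L R y'.
Proof. intros E H t Ht. destruct (H t Ht) as (i & Hi & Hc). exists i. rewrite <- E by auto. auto. Qed.

Lemma op_ext n L (R y y' : nat -> R) : (forall j, (j < n)%nat -> y j = y' j) -> order_preserving n L R y -> order_preserving n L R y'.
Proof. intros E (S & HS & Ha & Hi). exists S. split; auto. split.
  - intros t Ht. destruct (Ha t Ht) as (i & Si & Hc). exists i. rewrite <- E by auto. auto.
  - intros i j Si Sj Hij. rewrite <- !E by auto. auto. Qed.

Lemma complete x r n L y : (0 < L)%Z -> order_preserving n (IZR L) (fun i => IZR (r i)) y ->
  exists k, INR k <= cost n (fun i => IZR (x i)) y /\ (L <= Bs x r n k)%Z.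
Proof. intros HL (S & HS & Ha & Hi).
  destruct (averaging x y n) as (th & Hth & Hk).
  exists (kth x y th n). split; auto. eapply completeness_theta; eauto. Qed.

Lemma sound x r n L c : (0 < L)%Z -> (L <= Bs x r n c)%Z ->
  let y := fun j => IZR (recon x r n c j) in
  feasible n (IZR L) (fun i => IZR (r i)) y /\ order_preserving n (IZR L) (fun i => IZR (r i)) y /\
  cost n (fun i => IZR (x i)) y <= INR c.
Proof. intros HL HB y. destruct (soundness x r n c) as [Hc (S & HS & Hr & Hinc & Hcov)].
  assert (HF: IZR L <= IZR (Bs x r n c)) by (apply IZR_le; auto).
  assert (HL': 0 < IZR L) by (apply IZR_lt; auto).
  destruct Hcov as [[_ E]|Hcov]; [lra|].
  split; [|split; [|exact Hc]].
  - intros t Ht. destruct (Hcov t ltac:(lra)) as (j & Sj & Hj). exists j. auto.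
  - exists S. split; auto. split; auto. intros t Ht. apply Hcov. lra.
Qed.

Lemma npos n L (R y : nat -> R) : 0 < L -> feasible n L R y -> (1 <= n)%nat.
Proof. intros HL H. destruct (H 0 ltac:(lra)) as (i & Hi & _). lia. Qed.

Theorem mainTheorem7 :
  exists (P : list instr) (c : R), 0 <= c /\
    forall (n : nat) (L : Z) (x r : nat -> Z),
      (0 < L)%Z ->
      (forall i j, (i <= j < n)%nat -> (x i <= x j)%Z) ->
      (exists y, feasible n (IZR L) (fun i => IZR (r i)) y /\
                 order_preserving n (IZR L) (fun i => IZR (r i)) y) ->
      exists (fuel : nat) (m : mem),
        run P fuel 0 (init_mem n L x r) = Some m /\
        let y := output n m in
        feasible n (IZR L) (fun i => IZR (r i)) y /\
        order_preserving n (IZR L) (fun i => IZR (r i)) y /\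
        (forall y', feasible n (IZR L) (fun i => IZR (r i)) y' ->
                    order_preserving n (IZR L) (fun i => IZR (r i)) y' ->
                    cost n (fun i => IZR (x i)) y <= cost n (fun i => IZR (x i)) y') /\
        INR fuel <= c * ((cost n (fun i => IZR (x i)) y) ^ 2 * INR n + INR n + 1).
Proof.
  exists prog, 200. split; [lra|].
  intros n L x r HL _ (y0 & Hf0 & Hop0).
  assert (Hn: (1 <= n)%nat) by (eapply npos; [|exact Hf0]; apply IZR_lt; auto).
  destruct (complete x r n L y0 HL Hop0) as (k0 & _ & Hk0).
  destruct (seg_init n L x r) as (m1 & S1 & CI1).
  destruct (colloop n L x r k0 Hn Hk0 k0 0 m1 ltac:(lia) ltac:(lia) CI1)
    as (k2 & m2 & Kf & HKf & HLf & Hbelow & Hk2 & S2 & RC2).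
  destruct (seg_back n L x r Kf m2 RC2) as (m3 & S3 & BI3).
  destruct (bloop n L x r Kf n m3 Kf BI3) as (k4 & m4 & Hk4 & S4 & Out & Halt).
  assert (SS: Steps (11 + k2 + 5 + k4) 0 (init_mem n L x r) 71 m4).
  { eapply Steps_trans; [eapply Steps_trans; [eapply Steps_trans|]|]; eauto. }
  exists (11 + k2 + 5 + k4)%nat, m4. split. { eapply Steps_run; eauto. }
  intros y.
  set (yR := fun j => IZR (recon x r n Kf j)).
  assert (Ey: forall j, (j < n)%nat -> yR j = y j).
  { intros j Hj. unfold y, output, yR. rewrite Out by auto. reflexivity. }
  destruct (sound x r n L Kf HL HLf) as (Hf & Hop & Hc). fold yR in Hf, Hop, Hc.
  assert (Ec: cost n (fun i => IZR (x i)) y = cost n (fun i => IZR (x i)) yR).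
  { unfold cost. apply cost_upto_ext. intros j Hj. symmetry. auto. }
  assert (Hf': feasible n (IZR L) (fun i => IZR (r i)) y) by (eapply feas_ext; eauto).
  assert (Hop': order_preserving n (IZR L) (fun i => IZR (r i)) y) by (eapply op_ext; eauto).
  assert (Opt: forall y', order_preserving n (IZR L) (fun i => IZR (r i)) y' ->
     INR Kf <= cost n (fun i => IZR (x i)) y').
  { intros y' Hy'. destruct (complete x r n L y' HL Hy') as (k' & Hk' & HB').
    assert (Kf <= k')%nat.
    { destruct (Nat.le_gt_cases Kf k') as [|Hlt]; auto. specialize (Hbelow k' ltac:(lia)). lia. }
    apply le_INR in H. lra. }
  split; auto. split; auto. split.
  - intros y' _ Hy'. rewrite Ec. specialize (Opt y' Hy'). lra.
  - pose proof (Opt y Hop') as HKc. rewrite Ec in HKc.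
    assert (Hfuel: (11 + k2 + 5 + k4 <= 200 * (Kf * Kf * n + n + 1))%nat).
    { unfold colB in Hk2. nia. }
    set (fu := (11 + k2 + 5 + k4)%nat) in *.
    assert (Hfr: INR fu <= 200 * (INR Kf * INR Kf * INR n + INR n + 1)).
    { apply le_INR in Hfuel. rewrite mult_INR, !plus_INR, !mult_INR in Hfuel.
      rewrite (INR_IZR_INZ 200) in Hfuel. simpl (Z.of_nat 200) in Hfuel. simpl (INR 1) in Hfuel. lra. }
    rewrite Ec. set (C := cost n (fun i => IZR (x i)) yR) in *.
    assert (0 <= INR Kf) by apply pos_INR. assert (1 <= INR n) by (apply (le_INR 1); lia).
    assert (INR Kf * INR Kf <= C ^ 2) by nra.
    assert (INR Kf * INR Kf * INR n <= C ^ 2 * INR n) by nra.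
    lra.
Qed.
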